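(* Let $R\ge0$ and $p>0$. Let $\mathcal G$ be a hypergraph and $\pi:V(\mathcal G)\to U$ a function satisfying $|\pi(E)|=|E|$ for every $E\in\mathcal G$. If $\pi(\mathcal G)$ is $(p,R)$-Janson, then $\mathcal G$ is $(p,R)$-Janson.
   Context: A hypergraph is identified with its edge set, a family of subsets of its vertex set. $\pi(\mathcal G)$ is the hypergraph with vertex set $\pi(V(\mathcal G))$ and edge set $\{\pi(E):E\in\mathcal G\}$. For $\nu:\mathcal G\to\mathbb R_{\ge0}$: $e(\nu)=\sum_{E\in\mathcal G}\nu(E)$, $d_\nu(L)=\sum_{E\in\mathcal G,L\subset E}\nu(E)$, $\Lambda_p(\nu)=\sum_{L\subset V(\mathcal G),|L|\ge2}d_\nu(L)^2p^{-|L|}$. For $R>0$, $\mathcal G$ is $(p,R)$-Janson if there is $\nu:\mathcal G\to\mathbb R_{\ge0}$ with $\Lambda_p(\nu)<e(\nu)^2/R$; for $R=0$ every hypergraph is $(p,R)$-Janson. *)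

(* Defs.v *)
From mathcomp Require Import all_boot all_order all_algebra.
Set Implicit Arguments. Unset Strict Implicit. Unset Printing Implicit Defensive.
Import Order.TTheory GRing.Theory Num.Theory.
Local Open Scope ring_scope.

(* A hypergraph on a finite ground type T is given by its vertex set W and
   its edge set G (a family of subsets of T). *)

Section Janson.
Variables (F : realFieldType) (T : finType).

Definition e_nu (G : {set {set T}}) (nu : {set T} -> F) : F :=
  \sum_(E in G) nu E.

Definition d_nu (G : {set {set T}}) (nu : {set T} -> F) (L : {set T}) : F :=
  \sum_(E in G | L \subset E) nu E.

Definition Lambda (W : {set T}) (G : {set {set T}}) (p : F)
    (nu : {set T} -> F) : F :=
  \sum_(L : {set T} | (L \subset W) && (2 <= #|L|)%N)
     d_nu G nu L ^+ 2 * p ^- #|L|.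

Definition janson (W : {set T}) (G : {set {set T}}) (p R : F) : Prop :=
  R = 0 \/
  (0 < R /\ exists nu : {set T} -> F,
     (forall E, E \in G -> 0 <= nu E) /\
     Lambda W G p nu < e_nu G nu ^+ 2 / R).

End Janson.

Definition image_hg (V U : finType) (pi : V -> U) (G : {set {set V}})
  : {set {set U}} := [set pi @: (E : {set V}) | E in G].

(* Main.v *)
Require Import Defs.
From mathcomp Require Import all_boot all_order all_algebra.
Import Order.TTheory GRing.Theory Num.Theory.
Local Open Scope ring_scope.

Lemma sumsq_le (F : realFieldType) (I : finType) (P : pred I) (a : I -> F) :
  (forall i, P i -> 0 <= a i) ->
  \sum_(i | P i) a i ^+ 2 <= (\sum_(i | P i) a i) ^+ 2.
Proof.
move=> H; rewrite [X in _ <= X]expr2 mulr_suml; apply: ler_sum => i Pi.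
rewrite expr2; apply: ler_wpM2l; first exact: H.
rewrite (bigD1 i) //= lerDl; apply: sumr_ge0 => j /andP[Pj _]; exact: H.
Qed.

Section Aux.
Variables (F : realFieldType) (V U : finType) (G : {set {set V}}) (pi : V -> U).
Hypothesis inj : forall E, E \in G -> {in E &, injective pi}.

Definition rep (F0 : {set U}) : {set V} :=
  odflt set0 [pick E in G | pi @: E == F0].

Lemma repP F0 : F0 \in image_hg pi G -> rep F0 \in G /\ pi @: rep F0 = F0.
Proof.
move=> HF0; rewrite /rep; case: pickP => [E1 /andP [E1G /eqP E1F] | none] //=.
case/imsetP: HF0 => E0 E0G def; by have := none E0; rewrite E0G -def eqxx.
Qed.

Lemma Ksum (f : {set U} -> F) :
  \sum_(E in G) (if E == rep (pi @: E) then f (pi @: E) else 0)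
  = \sum_(F0 in image_hg pi G) f F0.
Proof.
rewrite (partition_big (P := fun E : {set V} => E \in G) (fun E : {set V} => pi @: E) (fun F0 => F0 \in image_hg pi G)) /=; last by move=> E EG; apply: imset_f.
apply: eq_bigr => F0 HF0.
rewrite (eq_bigr (fun E => if E == rep F0 then f F0 else 0));
  last by move=> E /andP[_ /eqP ->].
have [rG rF] := repP F0 HF0.
rewrite (bigD1 (rep F0)) /=; last by rewrite rG rF eqxx.
rewrite eqxx big1 ?addr0 // => E /andP[_ ne]; by rewrite (negbTE ne).
Qed.

Lemma setlem (E : {set V}) (M : {set U}) (L : {set V}) : E \in G -> M \subset pi @: E ->
  ((pi @: L == M) && (L \subset E)) = (L == E :&: pi @^-1: M).
Proof.
move=> EG ME; apply/idP/idP.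
- case/andP=> /eqP LM LE; apply/eqP/setP => x; rewrite !inE.
  apply/idP/andP.
  + move=> xL; split; first exact: (subsetP LE).
    by rewrite -LM; apply: imset_f.
  + case=> xE; rewrite -LM => /imsetP [y yL pxy].
    by rewrite (inj E EG x y xE (subsetP LE _ yL) pxy).
- move/eqP=> ->; rewrite subsetIl andbT; apply/eqP/setP => u.
  apply/imsetP/idP.
  + by case=> x; rewrite !inE => /andP[_ pxM] ->.
  + move=> uM; have := subsetP ME _ uM; case/imsetP=> x xE ux.
    by exists x => //; rewrite !inE xE -ux.
Qed.

End Aux.

Theorem lemma3p5 (F : realFieldType) (V U : finType) (R p : F)
  (G : {set {set V}}) (pi : V -> U) :
  0 <= R -> 0 < p ->
  (forall E, E \in G -> #|pi @: E| = #|E|) ->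
  janson (pi @: [set: V]) (image_hg pi G) p R ->
  janson [set: V] G p R.
Proof.
move=> R0 p0 Hc.
have inj : forall E, E \in G -> {in E &, injective pi}.
  by move=> E EG; apply/imset_injP; rewrite Hc.
case=> [->|[Rpos [nu' [nu'0 Hlt]]]]; [by left|right].
split=> //.
pose nu := fun E : {set V} => if E == @rep V U G pi (pi @: E) then nu' (pi @: E) else 0.
have nu0 : forall E, E \in G -> 0 <= nu E.
  move=> E EG; rewrite /nu; case: ifP => // _; apply: nu'0; exact: imset_f.
exists nu; split => //.
have He : e_nu G nu = e_nu (image_hg pi G) nu' by rewrite /e_nu -(@Ksum F V U G pi nu').
rewrite He; apply: le_lt_trans Hlt.
have dge0 : forall L, 0 <= d_nu G nu L.
  by move=> L; apply: sumr_ge0 => E /andP[EG _]; exact: nu0.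
have D : forall M, \sum_(L : {set V} | pi @: L == M) d_nu G nu L
                   = d_nu (image_hg pi G) nu' M.
  move=> M; rewrite /d_nu.
  rewrite (exchange_big_dep (fun E => E \in G)) /=; last by move=> L E _ /andP[].
  rewrite [RHS]big_mkcondr /= -(@Ksum F V U G pi); apply: eq_bigr => E EG.
  case: (boolP (M \subset pi @: E)) => ME.
  - rewrite (eq_bigl (pred1 (E :&: pi @^-1: M))); last first.
      by move=> L /=; rewrite EG /= (@setlem V U G pi inj E M L EG ME).
    by rewrite big_pred1_eq /nu.
  - rewrite big_pred0; first by case: ifP.
    move=> L /=; rewrite EG /=; apply/negP => /andP[/eqP LM LE].
    by move/negP: ME; apply; rewrite -LM; apply: imsetS.
have step1 : Lambda [set: V] G p nu =
   \sum_(L : {set V} | (2 <= #|pi @: L|)%N)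
       d_nu G nu L ^+ 2 * p ^- #|pi @: L|.
  rewrite /Lambda big_mkcond [RHS]big_mkcond; apply: eq_bigr => L _.
  rewrite subsetT /=.
  have [dz|eqc] : d_nu G nu L = 0 \/ #|pi @: L| = #|L|.
    case: (eqVneq #|pi @: L| #|L|) => [->|ne]; [by right|left].
    apply: big1 => E /andP[EG LE]; exfalso; move/eqP: ne; apply.
    apply/eqP/imset_injP; exact: (sub_in2 (subsetP LE) (inj E EG)).
  - by rewrite dz expr0n /= !mul0r; case: ifP => _; case: ifP.
  - by rewrite eqc.
rewrite step1 /Lambda.
rewrite (partition_big (P := fun L : {set V} => (2 <= #|pi @: L|)%N) (fun L : {set V} => pi @: L)
          (fun M => (M \subset pi @: [set: V]) && (2 <= #|M|)%N)) /=;
  last by move=> L HL; rewrite HL andbT; apply: imsetS; apply: subsetT.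
apply: ler_sum => M /andP[_ HM].
rewrite (eq_bigl (fun L : {set V} => pi @: L == M)); last first.
  by move=> L /=; case: eqP => [->|]; rewrite ?HM ?andbF.
rewrite (eq_bigr (fun L => d_nu G nu L ^+ 2 * p ^- #|M|)); last first.
  by move=> L /eqP ->.
rewrite -mulr_suml; apply: ler_wpM2r.
  by rewrite invr_ge0 exprn_ge0 // ltW.
rewrite -D; apply: sumsq_le => L _; exact: dge0.
Qed.
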